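(* Let $\Lambda=(\mathcal{L}\subset\mathbb{R}^s,\mathbb{R}^n)$ be a generic cut-and-project scheme with associated matrix $L$ and self-similarity $A\in\mathbb{R}^{n\times n}$, and let $B\in\mathbb{R}^{(s-n)\times(s-n)}$, $C\in\mathbb{Z}^{s\times s}$ satisfy $\begin{pmatrix}A&O\\O&B\end{pmatrix}L=LC$. Then each eigenvalue of $A$ is an algebraic conjugate of an eigenvalue of $B$, and each eigenvalue of $B$ is an algebraic conjugate of an eigenvalue of $A$.
   Context: Two algebraic numbers are algebraic conjugates if they have the same minimal polynomial over $\mathbb{Q}$. A lattice $\mathcal{L}\subset\mathbb{R}^s$ is $\{L\mathbf{r}:\mathbf{r}\in\mathbb{Z}^s\}$ for a non-singular $L\in\mathbb{R}^{s\times s}$. For $1\le n<s$ the scheme $(\mathcal{L}\subset\mathbb{R}^s,\mathbb{R}^n)$ has projections $\pi_\parallel(\mathbf{x})=(x_1,\dots,x_n)^\top$, $\pi_\perp(\mathbf{x})=(x_{n+1},\dots,x_s)^\top$; it is generic if $\pi_\parallel|_{\mathcal{L}}$, $\pi_\perp|_{\mathcal{L}}$ are injective and $\pi_\perp(\mathcal{L})$ is dense in $\mathbb{R}^{s-n}$. $A$ is a self-similarity of a generic scheme if $A\pi_\parallel(\mathcal{L})\subset\pi_\parallel(\mathcal{L})$ and there exist $C\in\mathbb{Z}^{s\times s}$, $B$ real with $\begin{pmatrix}A&O\\O&B\end{pmatrix}L=LC$. *)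

(* Defs.v *)
From HB Require Import structures.
From mathcomp Require Import all_boot all_order all_algebra.
From mathcomp Require Import reals complex.
Set Implicit Arguments. Unset Strict Implicit. Unset Printing Implicit Defensive.
Import Order.TTheory GRing.Theory Num.Theory.
Local Open Scope ring_scope.

(* Points of R^s are column vectors 'cV[R]_s, with s = n + m (m = s - n). *)

Definition latpt (R : realType) (s : nat) (L : 'M[R]_s) (r : 'cV[int]_s) : 'cV[R]_s :=
  L *m map_mx intr r.

Definition pi_par (R : realType) (n m : nat) (x : 'cV[R]_(n + m)) : 'cV[R]_n := usubmx x.
Definition pi_perp (R : realType) (n m : nat) (x : 'cV[R]_(n + m)) : 'cV[R]_m := dsubmx x.

Definition generic_scheme (R : realType) (n m : nat) (L : 'M[R]_(n + m)) : Prop :=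
  [/\ L \in unitmx,
      (forall r1 r2, pi_par (latpt L r1) = pi_par (latpt L r2) -> latpt L r1 = latpt L r2),
      (forall r1 r2, pi_perp (latpt L r1) = pi_perp (latpt L r2) -> latpt L r1 = latpt L r2)
    &
      (forall (y : 'cV[R]_m) (e : R), 0 < e ->
         exists r, forall i, `|pi_perp (latpt L r) i 0 - y i 0| < e)].

Definition self_similarity (R : realType) (n m : nat) (L : 'M[R]_(n + m)) (A : 'M[R]_n) : Prop :=
  (forall r, exists r', A *m pi_par (latpt L r) = pi_par (latpt L r')) /\
  exists (C : 'M[int]_(n + m)) (B : 'M[R]_m),
    block_mx A 0 0 B *m L = L *m map_mx intr C.

Definition cmx (R : realType) (p q : nat) (M : 'M[R]_(p, q)) : 'M[R[i]]_(p, q) :=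
  map_mx (fun x => (x%:C)%C) M.

(* x and y are algebraic conjugates: algebraic numbers with the same minimal
   polynomial over Q, i.e. both roots of one monic irreducible rational polynomial. *)
Definition alg_conj (R : realType) (x y : R[i]) : Prop :=
  exists p : {poly rat}, [/\ p \is monic, irreducible_poly p,
    root (map_poly ratr p) x & root (map_poly ratr p) y].

(* Main.v *)
Require Import Defs.
From HB Require Import structures.
From mathcomp Require Import all_boot all_order all_algebra.
From mathcomp Require Import reals complex.
Import GRing.Theory Num.Theory.
Local Open Scope ring_scope.
Set Implicit Arguments. Unset Strict Implicit.

Lemma eig_det (F : fieldType) k (M : 'M[F]_k) z :
  eigenvalue M z = (\det (M - z%:M) == 0).
Proof.
apply/eigenvalueP/det0P => [[v Hv nz]|[v nz Hv]]; exists v => //.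
  by rewrite mulmxBr Hv mul_mx_scalar subrr.
by apply/eqP; rewrite -subr_eq0 -mul_mx_scalar -mulmxBr Hv.
Qed.

Lemma horner_inter (F : comNzRingType) k (X M N : 'M[F]_k.+1) p :
  X *m M = N *m X -> X *m horner_mx M p = horner_mx N p *m X.
Proof.
move=> H; elim/poly_ind: p => [|p c IH]; first by rewrite !rmorph0 mulmx0 mul0mx.
rewrite !rmorphD !rmorphM /= !horner_mx_X !horner_mx_C -!mulmxE.
by rewrite mulmxDr mulmxDl mulmxA IH -!mulmxA H scalar_mxC.
Qed.

Lemma horner_block (F : comNzRingType) a b (A : 'M[F]_a.+1) (B : 'M[F]_b.+1) p :
  horner_mx (block_mx A 0 0 B : 'M_((a + b.+1).+1)) p =
  block_mx (horner_mx A p) 0 0 (horner_mx B p).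
Proof.
elim/poly_ind: p => [|p c IH].
  by rewrite !rmorph0 block_mx0.
rewrite !rmorphD !rmorphM /= !horner_mx_X !horner_mx_C -!mulmxE IH.
rewrite (@mulmx_block _ a.+1 b.+1 a.+1 b.+1 a.+1 b.+1) !mulmx0 !mul0mx ?addr0 ?add0r.
by rewrite (@scalar_mx_block _ a.+1 b.+1 c) (@add_block_mx _ a.+1 b.+1 a.+1 b.+1) ?addr0 ?add0r.
Qed.

From Stdlib Require Import Classical.
From mathcomp Require Import zify ring.

Lemma irr_root (F : numFieldType) (x : F) (p : {poly rat}) :
  p != 0 -> root (map_poly ratr p) x ->
  exists q : {poly rat}, [/\ q \is monic, irreducible_poly q & root (map_poly ratr q) x].
Proof.
move: {2}(size p) (leqnn (size p)) => k; elim: k p => [|k IH] p hk p0 hr.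
  by move: p0; rewrite -size_poly_gt0; case: (size p) hk.
have s1 : (1 < size p)%N.
  have := root_size_gt1 _ hr; rewrite size_map_poly; apply.
  by rewrite map_poly_eq0.
have [irr|nirr] := classic (irreducible_poly p).
  have lc0 : lead_coef p != 0 by rewrite lead_coef_eq0.
  have c0 : (lead_coef p)^-1 != 0 by rewrite invr_eq0.
  exists ((lead_coef p)^-1 *: p); split.
  - by rewrite monicE lead_coefZ mulVf.
  - split; first by rewrite size_scale.
    move=> q sq; rewrite (eqp_dvdr _ (eqp_scale _ c0)) (eqp_rtrans (eqp_scale _ c0)).
    exact: irr.
  - by rewrite map_polyZ rootZ // fmorph_eq0.
have [q [sq qd nqp]] : exists q : {poly rat}, [/\ size q != 1%N, q %| p & ~ q %= p].
  apply: NNPP => H; apply: nirr; split => // q sq qd.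
  by apply: NNPP => nq; apply: H; exists q.
have q0 : q != 0 by apply: contraNneq p0 => q0; move: qd; rewrite q0 dvd0p.
have sqp : (size q < size p)%N.
  rewrite ltn_neqAle dvdp_leq // andbT; apply/negP => /eqP e.
  by apply: nqp; rewrite -dvdp_size_eqp // e.
have sq1 : (1 < size q)%N.
  by move: sq; rewrite -size_poly_gt0 in q0; case: (size q) q0 => [|[|]].
have hp : p = p %/ q * q by rewrite divpK.
have d0 : p %/ q != 0 by apply: contraNneq p0 => d0; rewrite hp d0 mul0r.
have sd : (size (p %/ q)%R < size p)%N.
  rewrite {2}hp size_mul //.
  move: sq1; case: (size q) => [|b] // hb; rewrite addnS /= -{1}[size _]addn0 ltn_add2l; exact: hb.
move: hr; rewrite hp rmorphM rootM => /orP [] hr.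
  by apply: (IH (p %/ q)%R) => //; rewrite -ltnS (leq_trans sd).
by apply: (IH q) => //; rewrite -ltnS (leq_trans sqp).
Qed.

Lemma det_inter (F : fieldType) k (X M N : 'M[F]_k.+1) p :
  X \in unitmx -> X *m M = N *m X -> \det (horner_mx M p) = \det (horner_mx N p).
Proof.
move=> U H; have := congr1 determinant (horner_inter p H).
rewrite !det_mulmx mulrC => /mulIf; apply.
by rewrite -unitfE -unitmxE.
Qed.

Lemma det_block_horner (F : comNzRingType) a b (A : 'M[F]_a.+1) (B : 'M[F]_b.+1) p :
  \det (horner_mx (block_mx A 0 0 B : 'M_((a + b.+1).+1)) p) =
  \det (horner_mx A p) * \det (horner_mx B p).
Proof. by rewrite horner_block; exact: (@det_ublock _ a.+1 b.+1 (horner_mx A p) 0 (horner_mx B p)). Qed.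

Lemma eig_horner (F : fieldType) k (M : 'M[F]_k.+1) z f :
  eigenvalue M z -> root f z -> \det (horner_mx M f) = 0.
Proof.
rewrite eig_det => /eqP e /factor_theorem [q ->].
by rewrite rmorphM rmorphB /= horner_mx_X horner_mx_C -mulmxE det_mulmx e mulr0.
Qed.

Lemma horner_eig (F : closedFieldType) k (M : 'M[F]_k.+1) f :
  f \is monic -> \det (horner_mx M f) = 0 -> exists2 z, eigenvalue M z & root f z.
Proof.
move=> mf; have [r ->] := closed_field_poly_normal f.
rewrite (monicP mf) scale1r rmorph_prod /=.
elim: r => [|z r IH]; first by rewrite big_nil det1 => /eqP; rewrite oner_eq0.
rewrite !big_cons -mulmxE det_mulmx => /eqP; rewrite mulf_eq0 => /orP [] /eqP h.
  exists z; last by rewrite rootM root_XsubC eqxx.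
  by rewrite eig_det; rewrite rmorphB /= horner_mx_X horner_mx_C in h; rewrite h.
have [y ey ry] := IH h; exists y => //.
by rewrite rootM ry orbT.
Qed.

Lemma int_scale (F : numFieldType) k (u : 'cV[rat]_k) :
  exists r : 'cV[int]_k, exists2 d : F, d != 0 & map_mx intr r = d *: map_mx ratr u.
Proof.
pose D := \prod_(i < k) denq (u i 0).
exists (\col_i (numq (u i 0) * \prod_(j < k | j != i) denq (u j 0))).
exists (D%:~R).
  rewrite intr_eq0 /D; apply/prodf_neq0 => i _; exact: denq_neq0.
apply/matrixP => i j; rewrite !mxE (ord1 j) /D [in RHS](bigD1 i) //= /ratr.
rewrite !rmorphM /=.
have h : (denq (u i 0))%:~R != 0 :> F by rewrite intr_eq0 denq_neq0.
by field.
Qed.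

Section Core.
Variables (R : realType) (a b : nat).
Local Notation n := a.+1.
Local Notation m := b.+1.
Variables (L : 'M[R]_(n + m)) (A : 'M[R]_n) (B : 'M[R]_m) (C : 'M[int]_(n + m)).
Hypothesis gen : generic_scheme L.
Hypothesis eqn : block_mx A 0 0 B *m L = L *m map_mx intr C.

Lemma Lunit : L \in unitmx. Proof. by case: gen. Qed.

Lemma latpt_contra (u : 'cV[R]_(n + m)) r (d : R) :
  u != 0 -> d != 0 -> map_mx intr r = d *: u -> latpt L r = latpt L 0 -> False.
Proof.
move=> u0 d0 hr; rewrite /latpt hr map_mx0 mulmx0 -scalemxAr => /eqP.
rewrite scaler_eq0 (negPf d0) /= => /eqP h.
have : invmx L *m (L *m u) = 0 by rewrite h mulmx0.
by rewrite mulKmx ?Lunit // => /eqP; rewrite (negPf u0).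
Qed.

Lemma core (q : {poly rat}) :
  \det (horner_mx A (map_poly ratr q)) = 0 \/ \det (horner_mx B (map_poly ratr q)) = 0 ->
  exists (u : 'cV[R]_(n + m)) r (d : R), [/\ u != 0, d != 0, map_mx intr r = d *: u,
     horner_mx A (map_poly ratr q) *m usubmx (L *m u) = 0 &
     horner_mx B (map_poly ratr q) *m dsubmx (L *m u) = 0].
Proof.
move=> hAB.
pose Cq : 'M[rat]_((a + m).+1) := map_mx intr C.
pose CR : 'M[R]_((a + m).+1) := map_mx intr C.
have eCR : map_mx ratr Cq = CR by apply/matrixP => i j; rewrite !mxE ratr_int.
have hmap : map_mx ratr (horner_mx Cq q) = horner_mx CR (map_poly ratr q).
  by rewrite map_horner_mx eCR.
have inter : L *m CR = (block_mx A 0 0 B : 'M_((a + m).+1)) *m L by rewrite eqn.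
have hdet : \det (horner_mx CR (map_poly ratr q)) = 0.
  rewrite (det_inter _ Lunit inter) det_block_horner.
  by case: hAB => ->; rewrite ?mul0r ?mulr0.
have : \det (horner_mx Cq q)^T == 0.
  by rewrite det_tr -(fmorph_eq0 (ratr : {rmorphism rat -> R})) -det_map_mx hmap hdet.
case/det0P => v v0 hv.
pose u := map_mx ratr v^T : 'cV[R]_(n + m).
have u0 : u != 0 by rewrite map_mx_eq0 trmx_eq0.
have [r [d d0 hr]] := int_scale R v^T.
have hu : horner_mx CR (map_poly ratr q) *m u = 0.
  have := congr1 trmx hv; rewrite trmx_mul trmxK trmx0 => h.
  by rewrite /u -hmap -map_mxM h map_mx0.
have := horner_inter (map_poly ratr q) inter.
rewrite horner_block => hi.
have hw : block_mx (horner_mx A (map_poly ratr q)) 0 0 (horner_mx B (map_poly ratr q))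
   *m (L *m u) = 0.
  by rewrite mulmxA -hi -mulmxA hu mulmx0.
set w := L *m u in hw *.
have := hw; rewrite -[w]vsubmxK mul_block_col !mul0mx !addr0 !add0r.
move/eqP; rewrite col_mx_eq0 => /andP [/eqP h1 /eqP h2].
by exists u, r, d; split.
Qed.
Lemma AtoB q : \det (horner_mx A (map_poly ratr q)) = 0 ->
  \det (horner_mx B (map_poly ratr q)) = 0.
Proof.
move=> hA; apply/eqP; apply: contraT => hB0.
have [u [r [d [u0 d0 hr _ h2]]]] := core (or_introl hA).
have hd : dsubmx (L *m u) = 0.
  have := congr1 (mulmx (invmx (horner_mx B (map_poly ratr q)))) h2.
  by rewrite mulKmx ?unitmxE ?unitfE // mulmx0.
case: gen => _ _ inj _.
suff : False by []; apply: (latpt_contra u0 d0 hr); apply: inj.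
rewrite /pi_perp /latpt hr map_mx0 mulmx0 -scalemxAr linearZ /= hd scaler0.
by rewrite linear0.
Qed.

Lemma BtoA q : \det (horner_mx B (map_poly ratr q)) = 0 ->
  \det (horner_mx A (map_poly ratr q)) = 0.
Proof.
move=> hB; apply/eqP; apply: contraT => hA0.
have [u [r [d [u0 d0 hr h1 _]]]] := core (or_intror hB).
have hd : usubmx (L *m u) = 0.
  have := congr1 (mulmx (invmx (horner_mx A (map_poly ratr q)))) h1.
  by rewrite mulKmx ?unitmxE ?unitfE // mulmx0.
case: gen => _ inj _ _.
suff : False by []; apply: (latpt_contra u0 d0 hr); apply: inj.
rewrite /pi_par /latpt hr map_mx0 mulmx0 -scalemxAr linearZ /= hd scaler0.
by rewrite linear0.
Qed.
End Core.

Section Cplx.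
Variables (R : realType) (a b : nat).
Local Notation n := a.+1.
Local Notation m := b.+1.
Variables (L : 'M[R]_(n + m)) (A : 'M[R]_n) (B : 'M[R]_m) (C : 'M[int]_(n + m)).
Hypothesis gen : generic_scheme L.
Hypothesis eqn : block_mx A 0 0 B *m L = L *m map_mx intr C.

Lemma cmx_horner k (M : 'M[R]_k.+1) (q : {poly rat}) :
  cmx (horner_mx M (map_poly ratr q)) = horner_mx (cmx M) (map_poly ratr q).
Proof.
rewrite /cmx; change (fun x : R => (x%:C)%C) with (real_complex R).
rewrite map_horner_mx -map_poly_comp; congr horner_mx.
by apply: eq_map_poly => x /=; rewrite fmorph_rat.
Qed.

Lemma det_cmx_eq0 k (M : 'M[R]_k) : (\det (cmx M) == 0) = (\det M == 0).
Proof.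
rewrite /cmx; change (fun x : R => (x%:C)%C) with (real_complex R).
by rewrite det_map_mx fmorph_eq0.
Qed.

Lemma char_root (z : R[i]) :
  eigenvalue (cmx A) z \/ eigenvalue (cmx B) z ->
  root (map_poly ratr (char_poly (map_mx intr C : 'M[rat]_((a + m).+1)))) z.
Proof.
move=> hz.
pose Cc : 'M[R[i]]_((a + m).+1) := map_mx intr C.
have eC : map_mx ratr (map_mx intr C : 'M[rat]_((a + m).+1)) = Cc.
  by apply/matrixP => i j; rewrite !mxE ratr_int.
rewrite map_char_poly eC -eigenvalue_root_char eig_det.
have Lu : cmx L \in unitmx.
  rewrite /cmx; change (fun x : R => (x%:C)%C) with (real_complex R).
  by rewrite map_unitmx; case: gen.
have inter : cmx L *m Cc = (block_mx (cmx A) 0 0 (cmx B) : 'M_((a + m).+1)) *m cmx L.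
  have := congr1 (@cmx _ _ _) eqn.
  rewrite /cmx; change (fun x : R => (x%:C)%C) with (real_complex R).
  rewrite !map_mxM map_block_mx !map_mx0 => ->.
  congr (_ *m _); apply/matrixP => i j; rewrite !mxE.
  by rewrite rmorph_int.
have := det_inter ('X - z%:P) Lu inter.
rewrite rmorphB /= horner_mx_X horner_mx_C => ->.
rewrite det_block_horner.
case: hz => hz; rewrite (eig_horner hz) ?root_XsubC ?mul0r ?mulr0 //.
Qed.

Lemma dirAB (z : R[i]) : eigenvalue (cmx A) z ->
  exists2 w : R[i], eigenvalue (cmx B) w & alg_conj z w.
Proof.
move=> hz.
have P0 : char_poly (map_mx intr C : 'M[rat]_((a + m).+1)) != 0.
  by apply: monic_neq0; apply: char_poly_monic.
have [p [mp ip rp]] := irr_root P0 (char_root (or_introl hz)).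
have h1 := eig_horner hz rp.
have h2 : \det (horner_mx A (map_poly ratr p)) = 0.
  by apply/eqP; rewrite -det_cmx_eq0 cmx_horner h1.
have h3 := AtoB gen eqn h2.
have h4 : \det (horner_mx (cmx B) (map_poly ratr p)) = 0.
  by apply/eqP; rewrite -cmx_horner det_cmx_eq0 h3.
have mp2 : map_poly (ratr : rat -> R[i]) p \is monic by rewrite map_monic.
have [w ew rw] := horner_eig mp2 h4.
by exists w => //; exists p; split.
Qed.

Lemma dirBA (z : R[i]) : eigenvalue (cmx B) z ->
  exists2 w : R[i], eigenvalue (cmx A) w & alg_conj z w.
Proof.
move=> hz.
have P0 : char_poly (map_mx intr C : 'M[rat]_((a + m).+1)) != 0.
  by apply: monic_neq0; apply: char_poly_monic.
have [p [mp ip rp]] := irr_root P0 (char_root (or_intror hz)).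
have h1 := eig_horner hz rp.
have h2 : \det (horner_mx B (map_poly ratr p)) = 0.
  by apply/eqP; rewrite -det_cmx_eq0 cmx_horner h1.
have h3 := BtoA gen eqn h2.
have h4 : \det (horner_mx (cmx A) (map_poly ratr p)) = 0.
  by apply/eqP; rewrite -cmx_horner det_cmx_eq0 h3.
have mp2 : map_poly (ratr : rat -> R[i]) p \is monic by rewrite map_monic.
have [w ew rw] := horner_eig mp2 h4.
by exists w => //; exists p; split.
Qed.
End Cplx.

Theorem corollary2 (R : realType) (n m : nat) (hn : (0 < n)%N) (hm : (0 < m)%N)
  (L : 'M[R]_(n + m)) (A : 'M[R]_n) (B : 'M[R]_m) (C : 'M[int]_(n + m)) :
  generic_scheme L -> self_similarity L A ->
  block_mx A 0 0 B *m L = L *m map_mx intr C ->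
  (forall a : R[i], eigenvalue (cmx A) a ->
     exists2 b : R[i], eigenvalue (cmx B) b & alg_conj a b) /\
  (forall b : R[i], eigenvalue (cmx B) b ->
     exists2 a : R[i], eigenvalue (cmx A) a & alg_conj b a).
Proof.
case: n hn L A C => // n _ L A C; case: m hm L B C => // m _ L B C gen _ eqn.
by split; [apply: dirAB gen eqn | apply: dirBA gen eqn].
Qed.
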